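(* Let $q\in(0,1]$. Assume: [A5] there exists $\lambda>0$ with $\lim_{x\to0}p(x)/|x|^q=\lambda$; [A7] for every $M>0$, $\sup_{u,v\in\mathbb U_T,\ |u|,|v|<M,\ u\neq v}\frac{|\mathbb H_T(\theta^*+a_Tu)-\mathbb H_T(\theta^*+a_Tv)|}{|u-v|^q}\|G_T^{(00)}\|^q\to0$ in probability as $T\to\infty$. If $\hat u_T=a_T^{-1}(\hat\theta_T-\theta^* )=O_p(1)$ as $T\to\infty$, then $$P\bigl(\hat\theta_T^{(0)}=0\bigr)\to1\quad\text{as }T\to\infty.$$
   Context: Let $\Theta\subset\mathbb R^{\mathsf p}$ be a bounded open set with closure $\overline\Theta$ and $\theta^*\in\Theta$. Let $(\Omega,\mathcal F,P)$ be a probability space, $\mathbb T\subset\mathbb R_{\ge0}$ with $\sup\mathbb T=\infty$; limits $T\to\infty$ are along $\mathbb T$. For each $T\in\mathbb T$, $\mathbb H_T:\Omega\times\overline\Theta\to\mathbb R$ is a random field continuous in $\theta$ for every $\omega$. The penalty is $p_T(\theta)=\sum_{j=1}^{\mathsf p}\xi_T^jp(\theta_j)$ with (possibly random) $\xi_T^j>0$ and $p:\mathbb R\to\mathbb R_{\ge0}$, $p(0)=0$; $\mathbb H^\dagger_T=\mathbb H_T-p_T$, and $\hat\theta_T:\Omega\to\overline\Theta$ is measurable with $\mathbb H^\dagger_T(\hat\theta_T)=\max_{\theta\in\overline\Theta}\mathbb H^\dagger_T(\theta)$. $\mathcal J^{(0)}=\{j:\theta^*_j=0\}$, $\mathcal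 J^{(1)}=\{j:\theta^*_j\ne0\}$; for $x\in\mathbb R^{\mathsf p}$, $x^{(0)}=(x_j)_{j\in\mathcal J^{(0)}}$, and for a matrix $A$, $A^{(00)}=(A_{ij})_{i,j\in\mathcal J^{(0)}}$. $a_T=\mathrm{diag}(\alpha_T^1,\dots,\alpha_T^{\mathsf p})$ is deterministic, invertible, with $\|a_T\|\to0$ ($\|\cdot\|$ the spectral norm). $\mathbb U_T=\{u:\theta^*+a_Tu\in\overline\Theta\}$. $\tilde a_T$ is diagonal with $(\tilde a_T)_{jj}=(\xi_T^j)^{-1/q}$ for $j\in\mathcal J^{(0)}$ and $\alpha_T^j$ for $j\in\mathcal J^{(1)}$; $G_T=a_T^{-1}\tilde a_T$. $X_T=O_p(1)$ means: for every $\epsilon>0$ there exist $\mathcal T\in\mathbb T$, $M>0$ with $P(|X_T|>M)<\epsilon$ for all $T\ge\mathcal T$. *)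

(* Defs.v *)
From HB Require Import structures.
From mathcomp Require Import all_boot all_order all_algebra.
From mathcomp Require Import all_classical all_reals all_analysis.
Set Implicit Arguments. Unset Strict Implicit. Unset Printing Implicit Defensive.
Import Order.TTheory GRing.Theory Num.Theory.
Import numFieldNormedType.Exports.
Local Open Scope classical_set_scope.
Local Open Scope ring_scope.

Section Defs.
Variable R : realType.

Definition enorm n (x : 'cV[R]_n) : R := Num.sqrt (\sum_(i < n) x i 0 ^+ 2).

Definition specnorm m n (A : 'M[R]_(m, n)) : R :=
  sup [set enorm (A *m x) | x in [set x : 'cV[R]_n | enorm x <= 1]].

Definition subJJ n (J : {set 'I_n}) (A : 'M[R]_n) : 'M[R]_(#|J|) :=
  \matrix_(i, j) A (enum_val i) (enum_val j).

Definition cvgT (TT : set R) (f : R -> R) (l : R) : Prop :=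
  forall e : R, 0 < e -> exists T0 : R,
    forall T, TT T -> T0 <= T -> `|f T - l| < e.

Definition outerP d (Omega : measurableType d) (P : probability Omega R)
  (A : set Omega) : \bar R :=
  ereal_inf [set P B | B in [set B | measurable B /\ A `<=` B]].

Definition cvg0_inprob d (Omega : measurableType d) (P : probability Omega R)
  (TT : set R) (X : R -> Omega -> \bar R) : Prop :=
  forall eps : R, 0 < eps -> forall delta : R, 0 < delta ->
    exists T0 : R, forall T, TT T -> T0 <= T ->
      (outerP P [set w | (eps%:E <= `|X T w|)%E] < delta%:E)%E.

Definition Op1 d (Omega : measurableType d) (P : probability Omega R)
  (TT : set R) (X : R -> Omega -> R) : Prop :=
  forall eps : R, 0 < eps -> exists T0 : R, TT T0 /\ exists M : R, 0 < M /\
    forall T, TT T -> T0 <= T -> (P [set w | (M < `|X T w|)%R] < eps%:E)%E.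

End Defs.

(* Main.v *)
Set Warnings "-all".
Require Import Defs.
From HB Require Import structures.
From mathcomp Require Import all_boot all_order all_algebra.
From mathcomp Require Import all_classical all_reals all_analysis.
From mathcomp Require Import ring lra.
Import Order.TTheory GRing.Theory Num.Theory.
Import numFieldNormedType.Exports.
Set Implicit Arguments. Unset Strict Implicit. Unset Printing Implicit Defensive.
Local Open Scope classical_set_scope.
Local Open Scope ring_scope.

Section H.
Variable R : realType.

Lemma enorm_ge0 n (v : 'cV[R]_n) : 0 <= enorm v.
Proof. exact: sqrtr_ge0. Qed.

Lemma enorm_coord n (v : 'cV[R]_n) i : `|v i 0| <= enorm v.
Proof.
rewrite /enorm -sqrtr_sqr ler_sqrt; last by apply: sumr_ge0 => k _; exact: sqr_ge0.
by rewrite (bigD1 i) //= lerDl; apply: sumr_ge0 => k _; exact: sqr_ge0.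
Qed.

Lemma enorm_single n (v : 'cV[R]_n) j :
  (forall i, i != j -> v i 0 = 0) -> enorm v = `|v j 0|.
Proof.
move=> h; rewrite /enorm (bigD1 j) //= big1 ?addr0 ?sqrtr_sqr //.
by move=> i /h ->; rewrite expr0n.
Qed.

Lemma enorm_le n (u v : 'cV[R]_n) :
  (forall i, `|u i 0| <= `|v i 0|) -> enorm u <= enorm v.
Proof.
move=> h; rewrite /enorm ler_sqrt; last by apply: sumr_ge0 => k _; exact: sqr_ge0.
apply: ler_sum => i _; rewrite -[u i 0 ^+ 2]real_normK ?num_real //.
rewrite -[v i 0 ^+ 2]real_normK ?num_real //.
by apply: lerXn2r => //; rewrite nnegrE.
Qed.

Lemma specnorm_has_ub m n (A : 'M[R]_(m, n)) :
  has_ubound [set enorm (A *m x) | x in [set x : 'cV[R]_n | enorm x <= 1]].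
Proof.
exists (Num.sqrt (\sum_(i < m) (\sum_(k < n) `|A i k|) ^+ 2)).
move=> _ [x /= hx <-]; rewrite /enorm ler_sqrt; last first.
  by apply: sumr_ge0 => k _; exact: sqr_ge0.
apply: ler_sum => i _; rewrite -[_ ^+ 2]real_normK ?num_real //.
apply: lerXn2r; rewrite ?nnegrE //; first by apply: sumr_ge0.
rewrite mxE; apply: (le_trans (ler_norm_sum _ _ _)); apply: ler_sum => k _.
rewrite normrM; apply: ler_piMr => //.
exact: (le_trans (enorm_coord x k) hx).
Qed.

Lemma specnorm_entry m n (A : 'M[R]_(m, n)) i k : `|A i k| <= specnorm A.
Proof.
have e1 : enorm (delta_mx k 0 : 'cV[R]_n) = 1.
  rewrite (enorm_single (j:=k)); first by rewrite mxE !eqxx normr1.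
  by move=> i' /negbTE h; rewrite mxE h.
apply: (le_trans _ (ub_le_sup (specnorm_has_ub A) _)); last first.
  by exists (delta_mx k 0) => //=; rewrite e1.
apply: le_trans (enorm_coord _ i).
rewrite !mxE (bigD1 k) //= big1 ?addr0; first by rewrite mxE !eqxx mulr1.
by move=> k' /negbTE h; rewrite mxE h mulr0.
Qed.
Lemma diag_mulE m n (a : 'M[R]_m) (B : 'M[R]_(m, n)) i k :
  is_diag_mx a -> (a *m B) i k = a i i * B i k.
Proof.
move=> /is_diag_mxP ha; rewrite mxE (bigD1 i) //= big1 ?addr0 //.
by move=> i' hi; rewrite ha ?mul0r // eq_sym.
Qed.

Lemma meas_allzero d (Omega : measurableType d) p (f : Omega -> 'cV[R]_p)
  (J : {set 'I_p}) :
  (forall j, measurable_fun setT (fun w => f w j 0)) ->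
  measurable [set w | forall j, j \in J -> f w j 0 = 0].
Proof.
move=> mf.
have -> : [set w | forall j, j \in J -> f w j 0 = 0] =
   \bigcap_(j in [set j | j \in J]) ((fun w => f w j 0) @^-1` [set 0]).
  by apply/seteqP; split => w /= h j /h.
apply: fin_bigcap_measurable; first exact: finite_finset.
move=> j _.
by have := mf j measurableT _ (measurable_set1 0); rewrite setTI.
Qed.

Lemma meas_enorm_gt d (Omega : measurableType d) p (f : Omega -> 'cV[R]_p)
  (B : 'M[R]_p) (c : 'cV[R]_p) (M : R) : 0 < M ->
  (forall j, measurable_fun setT (fun w => f w j 0)) ->
  measurable [set w | M < enorm (B *m (f w - c))].
Proof.
move=> M0 mf.
pose g := fun w => \sum_(i < p) (\sum_(k < p) B i k * (f w k 0 - c k 0)) ^+ 2.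
have mg : measurable_fun setT g.
  apply: measurable_sum => i; apply: measurable_realfun.measurable_funX.
  apply: measurable_sum => k; apply: measurable_realfun.measurable_funM; first exact: measurable_cst.
  by apply: measurable_realfun.measurable_funB => //; exact: measurable_cst.
have heq : forall w, (M < enorm (B *m (f w - c))) = (M ^+ 2 < g w).
  move=> w; rewrite /enorm -{1}(ger0_norm (ltW M0)) -sqrtr_sqr !ltNge ler_sqrt ?sqr_ge0 //.
  by rewrite /g; under eq_bigr do rewrite !mxE; under eq_bigr do under eq_bigr do rewrite !mxE.
have -> : [set w | M < enorm (B *m (f w - c))] =
   (fun w => M ^+ 2 < g w) @^-1` [set true].
  apply/seteqP; split => w /=; rewrite heq //.
have mt : measurable [set true] by [].
have := measurable_realfun.measurable_fun_ltr (measurable_cst (M ^+ 2)) mg measurableT mt.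
by rewrite setTI.
Qed.
End H.

Unset Implicit Arguments. Set Strict Implicit. Set Printing Implicit Defensive.

Theorem theorem2 (R : realType) (p : nat)
  (Theta : set 'cV[R]_p) (thetas : 'cV[R]_p)
  (d : measure_display) (Omega : measurableType d) (P : probability Omega R)
  (TT : set R)
  (H : R -> Omega -> 'cV[R]_p -> R)
  (xi : R -> Omega -> 'I_p -> R) (pen : R -> R)
  (thetahat : R -> Omega -> 'cV[R]_p)
  (a : R -> 'M[R]_p) (q : R) :
  open Theta -> bounded_set Theta -> Theta thetas ->
  (forall T, TT T -> 0 <= T) -> (forall M : R, exists T, TT T /\ M < T) ->
  (forall T w, {within closure Theta, continuous (H T w)}) ->
  (forall T w j, 0 < xi T w j) ->
  (forall x, 0 <= pen x) -> pen 0 = 0 ->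
  let Hdag := fun T w (th : 'cV[R]_p) =>
    H T w th - \sum_(j < p) xi T w j * pen (th j 0) in
  (forall T j, measurable_fun setT (fun w => thetahat T w j 0)) ->
  (forall T w, closure Theta (thetahat T w)) ->
  (forall T w th, closure Theta th -> Hdag T w th <= Hdag T w (thetahat T w)) ->
  (forall T, is_diag_mx (a T)) -> (forall T, a T \in unitmx) ->
  cvgT TT (fun T => specnorm (a T)) 0 ->
  0 < q -> q <= 1 ->
  let J0 := [set j : 'I_p | thetas j 0 == 0]%SET in
  let atil := fun T w => diag_mx (\row_(j < p)
     (if j \in J0 then xi T w j `^ (- q^-1) else a T j j)) in
  let G := fun T w => invmx (a T) *m atil T w in
  let U := fun T => [set u : 'cV[R]_p | closure Theta (thetas + a T *m u)] in
  (* [A5] *)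
  (exists lam : R, 0 < lam /\
     (fun x => pen x / `|x| `^ q) x @[x --> (0:R)^'] --> lam) ->
  (* [A7] *)
  (forall M : R, 0 < M ->
     cvg0_inprob P TT (fun T w =>
       ereal_sup [set ((`|H T w (thetas + a T *m uv.1) - H T w (thetas + a T *m uv.2)|
                        / enorm (uv.1 - uv.2) `^ q)
                       * specnorm (subJJ J0 (G T w)) `^ q)%:E
                 | uv in [set uv : 'cV[R]_p * 'cV[R]_p |
                           [/\ U T uv.1, U T uv.2, enorm uv.1 < M,
                               enorm uv.2 < M & uv.1 <> uv.2]]])) ->
  (* uhat_T = a_T^{-1}(thetahat_T - thetas) = O_p(1) *)
  Op1 P TT (fun T w => enorm (invmx (a T) *m (thetahat T w - thetas))) ->
  cvgT TT (fun T => fine (P [set w | forall j, j \in J0 -> thetahat T w j 0 = 0])) 1.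

Proof.
move=> oTh bTh Tht TTge TTunb Hc xipos penge pen0 Hdag mth cth maxh adiag aunit
  acvg q0 q1 J0 atil G U [lam [lam0 A5]] A7 Op e e0.
have [dd dd0 hdd] : exists2 dd : R, 0 < dd & forall x : R, x != 0 -> `|x| < dd ->
    lam / 2 < pen x / `|x| `^ q.
  have l2 : 0 < lam / 2 by rewrite divr_gt0.
  move/cvgrPdist_lt: A5 => /(_ (lam / 2) l2) /nbhs_ballP [dd dd0 hb].
  exists dd => // x x0 xd.
  have : ball (0:R) dd x by rewrite /ball /= sub0r normrN.
  move=> /hb /(_ x0); rewrite ltr_norml => /andP [h1 h2]; lra.
have [r r0 hr] : exists2 r : R, 0 < r & forall y : 'cV[R]_p,
    (forall i, `|y i 0 - thetas i 0| < r) -> Theta y.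
  have : nbhs thetas Theta by apply: open_nbhs_nbhs; split.
  move=> /nbhs_ballP [r r0 hb]; exists r => // y hy; apply: hb.
  split => // i j; rewrite (ord1 j) /ball /= -normrN opprB; exact: hy.
have e2 : 0 < e / 2 by rewrite divr_gt0.
have l2 : 0 < lam / 2 by rewrite divr_gt0.
have [T0 [TT0 [M [M0 hOp]]]] := Op (e / 2) e2.
have M10 : 0 < M + 1 by rewrite addr_gt0.
have [T2 hA7] := A7 (M + 1) M10 (lam / 2) l2 (e / 2) e2.
pose e' := Num.min r dd / (M + 1).
have e'0 : 0 < e' by rewrite divr_gt0 // lt_min r0 dd0.
have [T1 hac] := acvg e' e'0.
exists (Num.max T0 (Num.max T1 T2)) => T TTT.
rewrite !ge_max => /and3P [hT0 hT1 hT2].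
set Tg := [set w | forall j, j \in J0 -> thetahat T w j 0 = 0].
pose S := fun w => ereal_sup [set ((`|H T w (thetas + a T *m uv.1) - H T w (thetas + a T *m uv.2)|
                        / enorm (uv.1 - uv.2) `^ q)
                       * specnorm (subJJ J0 (G T w)) `^ q)%:E
                 | uv in [set uv : 'cV[R]_p * 'cV[R]_p |
                           [/\ U T uv.1, U T uv.2, enorm uv.1 < M + 1,
                               enorm uv.2 < M + 1 & uv.1 <> uv.2]]].
have core : forall w, enorm (invmx (a T) *m (thetahat T w - thetas)) <= M ->
    forall j, j \in J0 -> thetahat T w j 0 != 0 -> ((lam / 2)%:E <= `|S w|)%E.
  move=> w huM j hj hxne.
  have cthw := cth T w.
  set th := thetahat T w in huM hxne cthw *.
  set u := invmx (a T) *m (th - thetas) in huM *.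
  have hau : a T *m u = th - thetas by rewrite /u mulmxA mulmxV // mul1mx.
  have hdi : forall i, a T i i * u i 0 = th i 0 - thetas i 0.
    by move=> i; rewrite -diag_mulE // hau !mxE.
  have hts : thetas j 0 = 0 by move: hj; rewrite /J0 inE => /eqP.
  have hac' : `|specnorm (a T)| < e' by have := hac T TTT hT1; rewrite subr0.
  have hai : forall i, `|a T i i| * (M + 1) < Num.min r dd.
    move=> i; rewrite -ltr_pdivlMr //.
    exact: le_lt_trans (le_trans (specnorm_entry (a T) i i) (ler_norm _)) hac'.
  have hui : forall i, `|u i 0| <= M := fun i => le_trans (enorm_coord u i) huM.
  have hdiff : forall i, `|th i 0 - thetas i 0| < Num.min r dd.
    move=> i; rewrite -hdi normrM; apply: le_lt_trans (hai i).
    apply: le_trans (ler_wpM2l (normr_ge0 _) (hui i)) _.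
    by apply: ler_wpM2l => //; rewrite lerDl.
  pose u' : 'cV[R]_p := \col_i (if i == j then 0 else u i 0).
  pose th' := thetas + a T *m u'.
  have th'E : forall i, th' i 0 = if i == j then 0 else th i 0.
    move=> i; rewrite /th' [in LHS]mxE diag_mulE // mxE.
    case: eqP => [->|_]; first by rewrite hts mulr0 addr0.
    by rewrite hdi addrC subrK.
  have Th' : Theta th'.
    apply: hr => i; rewrite th'E; case: eqP => [->|_].
      by rewrite hts subrr normr0.
    by have := hdiff i; rewrite lt_min => /andP [].
  have cTh' : closure Theta th' := subset_closure Th'.
  have hmax := maxh T w th' cTh'.
  rewrite /Hdag -/th in hmax.
  pose Rr := \sum_(i < p | i != j) xi T w i * pen (th i 0).
  have s1 : \sum_(i < p) xi T w i * pen (th' i 0) = Rr.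
    rewrite (bigD1 j) //= th'E eqxx pen0 mulr0 add0r; apply: eq_bigr => i /negbTE hij.
    by rewrite th'E hij.
  have s2 : \sum_(i < p) xi T w i * pen (th i 0) = xi T w j * pen (th j 0) + Rr.
    by rewrite (bigD1 j).
  rewrite s1 s2 in hmax.
  have hHd : xi T w j * pen (th j 0) <= `|H T w th - H T w th'|.
    by apply: le_trans (ler_norm _); lra.
  have xE : th j 0 = a T j j * u j 0 by rewrite hdi hts subr0.
  have ajj0 : a T j j != 0.
    by apply/eqP => h; move/eqP: hxne; apply; rewrite xE h mul0r.
  have uj0 : u j 0 != 0.
    by apply/eqP => h; move/eqP: hxne; apply; rewrite xE h mulr0.
  have hxd : `|th j 0| < dd.
    by have := hdiff j; rewrite hts subr0 lt_min => /andP [].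
  have hlam := hdd _ hxne hxd.
  have ed : enorm (u - u') = `|u j 0|.
    rewrite (enorm_single (j:=j)); first by rewrite !mxE eqxx subr0.
    by move=> i /negbTE h; rewrite !mxE h subrr.
  have Gjj : a T j j * G T w j j = xi T w j `^ (- q^-1).
    by rewrite -diag_mulE // /G mulmxA mulmxV // mul1mx /atil !mxE eqxx mulr1n hj.
  have sG : `|G T w j j| <= specnorm (subJJ J0 (G T w)).
    have := specnorm_entry (subJJ J0 (G T w)) (enum_rank_in hj j) (enum_rank_in hj j).
    by rewrite /subJJ mxE enum_rankK_in.
  have xi0 := xipos T w j.
  have X0 : 0 < `|u j 0| `^ q by apply: powR_gt0; rewrite normr_gt0.
  have A0 : 0 < `|a T j j| `^ q by apply: powR_gt0; rewrite normr_gt0.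
  have gq : `|G T w j j| `^ q = (xi T w j)^-1 / `|a T j j| `^ q.
    apply: (mulIf (lt0r_neq0 A0)); rewrite mulfVK ?lt0r_neq0 //.
    rewrite -powRM // mulrC -normrM Gjj ger0_norm ?powR_ge0 //.
    by rewrite -powRrM mulNr mulVf ?lt0r_neq0 // powR_inv1 // ltW.
  have xq : `|th j 0| `^ q = `|a T j j| `^ q * `|u j 0| `^ q.
    by rewrite xE normrM powRM.
  have hterm : pen (th j 0) / `|th j 0| `^ q <=
      `|H T w th - H T w th'| / enorm (u - u') `^ q
        * specnorm (subJJ J0 (G T w)) `^ q.
    rewrite ed.
    have -> : pen (th j 0) / `|th j 0| `^ q =
        (xi T w j * pen (th j 0)) / `|u j 0| `^ q * `|G T w j j| `^ q.
      rewrite gq xq; field.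
      by rewrite !lt0r_neq0.
    apply: ler_pM.
    - by apply: divr_ge0 => //; apply: mulr_ge0 => //; exact: ltW.
    - exact: powR_ge0.
    - by apply: ler_wpM2r => //; rewrite invr_ge0 ltW.
    - apply: ge0_ler_powR => //; first exact: ltW.
      by rewrite nnegrE (le_trans _ sG).
  apply: le_trans (lee_abs _).
  apply: le_trans (_ : (_ : R)%:E <= S w)%E.
    by rewrite lee_fin; apply: ltW (lt_le_trans hlam hterm).
  apply: ereal_sup_ubound; exists (u, u') => //=.
  split => /=.
  - by rewrite /U /= hau addrC subrK.
  - exact: cTh'.
  - by apply: le_lt_trans huM _; rewrite ltrDl.
  - apply: le_lt_trans (enorm_le (v := u) _) _.
      by move=> i; rewrite mxE; case: ifP => _; rewrite ?normr0.
    by apply: le_lt_trans huM _; rewrite ltrDl.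
  - move=> h; move/eqP: uj0; apply.
    have hu' : u' j 0 = 0 by rewrite mxE eqxx.
    by have := congr1 (fun v : 'cV[R]_p => v j 0) h; rewrite /= hu'.
  by rewrite hau [thetas + _]addrC subrK.
have [_ [B [mB sB] <-] PB] := ereal_inf_lt (hA7 T TTT hT2).
pose A := [set w | M < `|enorm (invmx (a T) *m (thetahat T w - thetas))|].
have mA : measurable A.
  have -> : A = [set w | M < enorm (invmx (a T) *m (thetahat T w - thetas))].
    by rewrite /A; apply/seteqP; split => w /=; rewrite ger0_norm // enorm_ge0.
  by apply: meas_enorm_gt => //; exact: mth.
have PA : (P A < (e / 2)%:E)%E := hOp T TTT hT0.
have mTg := meas_allzero J0 (mth T).
have sub : ~` (A `|` B) `<=` Tg.
  move=> w /= nAB j hj; apply/eqP; apply: contraT => hne; exfalso.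
  have hM : enorm (invmx (a T) *m (thetahat T w - thetas)) <= M.
    by rewrite leNgt; apply/negP => h; apply: (nAB); left; rewrite /A /= ger0_norm // enorm_ge0.
  by apply: (nAB); right; apply: sB; exact: (core w hM j hj hne).
have mU : measurable (A `|` B) by exact: measurableU.
have fP : forall X, measurable X -> P X = (fine (P X))%:E.
  by move=> X mX; rewrite fineK // fin_num_measure.
have hU : (P (A `|` B) <= P A + P B)%E := measureU2 P mA mB.
have hC : P (~` (A `|` B)) = (1 - P (A `|` B))%E := probability_setC P mU.
have hle : (P (~` (A `|` B)) <= P Tg)%E.
  by apply: le_measure => //; rewrite inE //; exact: measurableC.
have h1 : (P Tg <= 1)%E := probability_le1 P mTg.
have h0 : 0 <= fine (P Tg).
  by apply: fine_ge0; exact: measure_ge0.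
rewrite (fP _ mA) in PA hU; rewrite (fP _ mB) in PB hU; rewrite (fP _ mU) in hU hC.
rewrite (fP _ (measurableC mU)) in hC hle; rewrite (fP _ mTg) in hle h1.
move/(congr1 fine): hC => /= hC.
move: PA PB hU hle h1; rewrite !lte_fin !lee_fin => PA PB hU hle h1.
move: h0 hC; rewrite /Tg => h0 hC.
rewrite ltr_norml; apply/andP; split; lra.
Qed.
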